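(* Both the unperturbed transition probability function $P$ ($\lambda=0$) and the perturbed transition probability function $P_\lambda$ ($\lambda>0$) of the perturbed learning automata Markov chain have the weak Feller property, i.e., for every bounded continuous $f:\mathcal{Z}\to\mathbb{R}$, the functions $z\mapsto\int_{\mathcal{Z}}P(z,dy)f(y)$ and $z\mapsto\int_{\mathcal{Z}}P_\lambda(z,dy)f(y)$ are continuous on $\mathcal{Z}$.
   Context: Finite game: players $\mathcal{I}=\{1,\dots,n\}$, finite action sets $\mathcal{A}_i$, $\mathcal{A}=\prod_i\mathcal{A}_i$, utilities $u_i:\mathcal{A}\to\mathbb{R}$ with $u_i(\alpha)>0$ for all $i,\alpha$. $\mathcal{X}_i=\Delta(|\mathcal{A}_i|)$ (probability simplex, actions identified with unit vectors $e_{\alpha_i}$), $\mathcal{X}=\prod_i\mathcal{X}_i$, $\mathcal{Z}=\mathcal{A}\times\mathcal{X}$ with the product of the discrete topology on $\mathcal{A}$ and the Euclidean topology on $\mathcal{X}$. Step size $\epsilon>0$ with $0<\epsilon u_i(\alpha)<1$ for all $i,\alpha$. The chain: from $(\alpha(t),x(t))$, each agent $i$ independently selects $\alpha_i(t+1)$ according to $x_i(t)$ with probability $1-\lambda$ and uniformly on $\mathcal{A}_i$ with probability $\lambda$; then $x_i(t+1)=x_i(t)+\epsilon u_i(\alpha(t+1))(e_{\alpha_i(t+1)}-x_i(t))$. $P_\lambda$ is its transition probability function and $P$ the one for $\lambda=0$. *)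

(* Defs.v *)
From HB Require Import structures.
From mathcomp Require Import all_boot all_order all_algebra.
From mathcomp Require Import all_classical all_reals all_analysis.
Set Implicit Arguments. Unset Strict Implicit. Unset Printing Implicit Defensive.
Import Order.TTheory GRing.Theory Num.Theory.
Import numFieldNormedType.Exports.
Local Open Scope classical_set_scope.
Local Open Scope ring_scope.

(* Players are 'I_n; player i has the finite action set 'I_(m i).          *)
Definition profile (n : nat) (m : 'I_n -> nat) : finType :=
  {dffun forall i : 'I_n, 'I_(m i)}.

(* Mixed strategies: x i is a row vector in R^(m i) (Euclidean topology);  *)
(* the strategy space carries the (finite) product topology = Euclidean.   *)
Definition strat (R : realType) (n : nat) (m : 'I_n -> nat) : Type :=
  prod_topology (fun i : 'I_n => 'rV[R]_(m i)).

Definition state (R : realType) (n : nat) (m : 'I_n -> nat) : Type :=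
  (discrete_topology (profile m) * strat R m)%type.

Definition simplexes (R : realType) (n : nat) (m : 'I_n -> nat) : set (strat R m) :=
  [set x | forall i : 'I_n,
      (forall a : 'I_(m i), 0 <= x i 0 a) /\ \sum_(a < m i) x i 0 a = 1].

Definition Zspace (R : realType) (n : nat) (m : 'I_n -> nat) : set (state R m) :=
  [set z | simplexes z.2].

(* with prob. 1-lambda according to xi, with prob. lambda uniformly.       *)
Definition sel_prob (R : realType) (k : nat) (lambda : R) (xi : 'rV[R]_k)
  (a : 'I_k) : R :=
  (1 - lambda) * xi 0 a + lambda / k%:R.

(* Probability of the next action profile alpha' (independent agents). *)
Definition profile_prob (R : realType) (n : nat) (m : 'I_n -> nat)
  (lambda : R) (x : strat R m) (alpha' : profile m) : R :=
  \prod_(i < n) sel_prob lambda (x i) (alpha' i).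

Definition strat_update (R : realType) (n : nat) (m : 'I_n -> nat)
  (u : 'I_n -> profile m -> R) (eps : R) (x : strat R m) (alpha' : profile m)
  : strat R m :=
  fun i => x i + (eps * u i alpha') *: (delta_mx 0 (alpha' i) - x i).

(* z |-> \int_Z P_lambda(z, dy) f(y).  The measure P_lambda(z, .) is the    *)
(* finitely supported measure                                              *)
(*   sum_{alpha'} profile_prob lambda x alpha' * dirac (alpha', update),    *)
(* so the integral is (literally) the corresponding finite weighted sum.   *)
(* P is the case lambda = 0.                                               *)
Definition kernel_int (R : realType) (n : nat) (m : 'I_n -> nat)
  (u : 'I_n -> profile m -> R) (eps lambda : R) (f : state R m -> R)
  (z : state R m) : R :=
  \sum_(alpha' : profile m)
     profile_prob lambda z.2 alpha' * f (alpha', strat_update u eps z.2 alpha').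

Definition weak_feller (R : realType) (n : nat) (m : 'I_n -> nat)
  (u : 'I_n -> profile m -> R) (eps lambda : R) : Prop :=
  forall f : state R m -> R,
    {within @Zspace R n m, continuous f} ->
    (exists M : R, forall z, @Zspace R n m z -> `|f z| <= M) ->
    {within @Zspace R n m, continuous (kernel_int u eps lambda f)}.

(* Main.v *)
Require Import Defs.
From HB Require Import structures.
From mathcomp Require Import all_boot all_order all_algebra.
From mathcomp Require Import all_classical all_reals all_analysis.
From mathcomp Require Import ring lra.
Import Order.TTheory GRing.Theory Num.Theory.
Local Open Scope classical_set_scope.
Local Open Scope ring_scope.

Lemma prod_cvg_helper {I : Type} {K : I -> topologicalType} {T : Type}
  (F : set_system T) (FF : Filter F) (g : T -> prod_topology K) (x : prod_topology K) :
  (forall i, g y i @[y --> F] --> x i) -> g @ F --> x.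
Proof.
move=> h.
apply/(@cvg_sup _ _ (fun i => Topological.class
    (initial_topology (fun f : (forall i, K i) => f i))) (g @ F) x).
move=> i U [? /= [[W oW <-]]] /= Wsfz /filterS; apply.
apply: (h i).
exact: open_nbhs_nbhs.
Qed.

Import numFieldNormedType.Exports.
Section S.
Variables (R : realType) (n : nat) (m : 'I_n -> nat).
Local Notation Sx := (prod_topology (fun i : 'I_n => 'rV[R]_(m i))).
Local Notation St := (discrete_topology (profile m) * Sx)%type.

Lemma snd_i_cont (i : 'I_n) : continuous (fun z : St => z.2 i).
Proof.
move=> z; apply: (@cvg_comp _ _ _ snd (fun x : Sx => x i) _ (nbhs z.2)).
  exact: cvg_snd.
exact: (@proj_continuous _ (fun i => 'rV[R]_(m i))).
Qed.

Lemma coord_cont (i : 'I_n) (a : 'I_(m i)) : continuous (fun z : St => z.2 i 0 a).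
Proof.
move=> z; apply: (@cvg_comp _ _ _ (fun z : St => z.2 i) (fun M : 'rV[R]_(m i) => M 0 a) _ (nbhs (z.2 i))).
  exact: snd_i_cont.
exact: coord_continuous.
Qed.

Lemma upd_cont (u : 'I_n -> profile m -> R) (eps : R) (b : profile m) :
  continuous (fun z : St => ((b : discrete_topology (profile m)), strat_update u eps z.2 b) : St).
Proof.
move=> z; apply: (@cvg_pair _ _ _ _ (nbhs (b : discrete_topology (profile m))) (nbhs (strat_update u eps z.2 b : Sx)) _ _ _ (fun _ => b) (fun z : St => strat_update u eps z.2 b : Sx)); first exact: cvg_cst.
apply: prod_cvg_helper => i /=; rewrite /strat_update.
apply: cvgD; first exact: snd_i_cont.
apply: cvgZr; apply: cvgB; first exact: cvg_cst.
exact: snd_i_cont.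
Qed.

Lemma aux_ge0 (c d y : R) : 0 < c -> c < 1 -> 0 <= d -> 0 <= y -> 0 <= y + c * (d - y).
Proof. move=> *; nra. Qed.

Lemma upd_simplex (u : 'I_n -> profile m -> R) (eps : R) (b : profile m) (x : Sx) :
  (forall i, 0 < eps * u i b < 1) ->
  simplexes x -> simplexes (strat_update u eps x b : strat R m).
Proof.
move=> hc hx i; have [hpos hsum] := hx i.
have /andP[c0 c1] := hc i.
rewrite /strat_update; split.
  move=> a; rewrite !mxE.
  set d := (_ %:R); have d0 : 0 <= d by rewrite ler0n.
  by apply: aux_ge0 => //; exact: hpos.
under eq_bigr do rewrite !mxE.
rewrite big_split /= -big_distrr /= big_split /= sumrN hsum.
rewrite (bigD1 (b i)) //= eqxx big1 ?addr0; last by move=> a /negbTE; rewrite eq_sym => ->.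
by rewrite /= mulr1n subrr mulr0 addr0.
Qed.

Lemma within_comp_cvg (A : set St) (h : St -> St) (x : St) :
  continuous h -> (forall y, A y -> A (h y)) ->
  h @ within A (nbhs x) --> within A (nbhs (h x)).
Proof.
move=> hc hA W hW.
have H : nbhs (h x) (fun y => A y -> W y) := hW.
have H' : nbhs x (h @^-1` (fun y => A y -> W y)) by exact: hc.
change (nbhs x (fun y => A y -> W (h y))).
by apply: filterS H' => y /= H2 Ay; apply: H2; apply: hA.
Qed.

Lemma wf (u : 'I_n -> profile m -> R) (eps lam : R) :
  (forall (i : 'I_n) (alpha : profile m), 0 < eps * u i alpha < 1) ->
  weak_feller u eps lam.
Proof.
move=> hc f fc _.
have fc' := (subspace_continuousP _ _).1 fc.
apply/subspace_continuousP => x Ax.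
rewrite /kernel_int.
apply: (@cvg_big R^o _ +%R 0 xpredT add_continuous) => b _.
apply: cvgM.
  apply: (@cvg_big R^o _ *%R 1 xpredT mul_continuous) => i _.
  rewrite /sel_prob.
  apply: cvgD; last exact: cvg_cst.
  apply: cvgMr; apply: cvg_within_filter.
  exact: (coord_cont i (b i) x).
have hA : forall y : St, Zspace y -> Zspace ((b : discrete_topology (profile m)), strat_update u eps y.2 b : Sx).
  by move=> y Ay; apply: upd_simplex.
have H1 := cvg_comp _ _ (@within_comp_cvg _ _ x (upd_cont u eps b) hA) (fc' _ (hA x Ax)).
exact: H1.
Qed.
End S.

Theorem proposition3p1 (R : realType) (n : nat) (m : 'I_n -> nat)
  (u : 'I_n -> profile m -> R) (eps : R) :
  (forall i : 'I_n, (0 < m i)%N) ->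
  (forall (i : 'I_n) (alpha : profile m), 0 < u i alpha) ->
  0 < eps ->
  (forall (i : 'I_n) (alpha : profile m), 0 < eps * u i alpha < 1) ->
  weak_feller u eps 0 /\
  (forall lambda : R, 0 < lambda <= 1 -> weak_feller u eps lambda).
Proof.
move=> _ _ _ hc; split; first exact: wf.
by move=> lam _; exact: wf.
Qed.
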